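(* Let $\Omega\subset\mathbb{R}^3$ be a domain and $\mathbf{x}=\boldsymbol{\chi}(\mathbf{X})$ a smooth, one-to-one, invertible map of $\Omega$ onto $\omega$, with deformation gradient $F_{iI}=\partial x_i/\partial X_I$, Jacobian $\Lambda=\det\mathbf{F}>0$, and polar decomposition $\mathbf{F}=\mathbf{V}\mathbf{R}$ ($\mathbf{R}$ proper orthogonal, $\mathbf{V}$ symmetric positive definite with $\mathbf{V}^2=\mathbf{F}\mathbf{F}^t$). Suppose the rotation $\mathbf{R}$ is constant. Let $\kappa_0,\rho_0>0$ be constants. Then the normal acoustic fluid with energy density $$E_0=\kappa_0\big(\partial U_I/\partial X_I\big)^2+\rho_0\,\dot{\mathbf{U}}\cdot\dot{\mathbf{U}}\quad\text{in }\Omega$$ is mapped to a metafluid with isotropic inertia, with energy density $$E=\lambda\big(V_{ij}\,\partial u_j/\partial x_i\big)^2+\rho\,\dot{\mathbf{u}}\cdot\dot{\mathbf{u}}\quad\text{in }\omega,\qquad \lambda=\Lambda^{-1}\kappa_0,\quad \rho=\Lambda^{-1}\rho_0,$$ in the sense that these energy densities are equivalent ($E\,\mathrm{d}v=E_0\,\mathrm{d}V$) under the correspondence of displacements $\mathbf{u}=\mathbf{R}\mathbf{U}$. Moreover, the total mass $\int_\omega\rho\,\mathrm{d}v$ of the deformed region equals the total mass $\int_\Omega\rho_0\,\mathrm{d}V$ of $\Omega$.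
   Context: Repeated indices are summed; upper-case indices refer to undeformed coordinates $\mathbf{X}$, lower-case to deformed coordinates $\mathbf{x}$; $\mathrm{d}v=\Lambda\,\mathrm{d}V$. Quantities in $\omega$ are evaluated at $\mathbf{x}=\boldsymbol{\chi}(\mathbf{X})$. *)

(* Defs.v *)
From HB Require Import structures.
From mathcomp Require Import all_boot all_order all_algebra.
From mathcomp Require Import all_classical all_reals all_analysis.
Set Implicit Arguments. Unset Strict Implicit. Unset Printing Implicit Defensive.
Import Order.TTheory GRing.Theory Num.Theory.
Import numFieldNormedType.Exports.
Local Open Scope classical_set_scope.
Local Open Scope ring_scope.

(* Points of R^3 are row vectors 'rV[R]_3; component i of a point/vector v is v ord0 i. *)

Definition pd (R : realType) (f : 'rV[R]_3 -> R) (I : 'I_3) (X : 'rV[R]_3) : R :=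
  derive f X (delta_mx ord0 I).

Definition tdot (R : realType) (f : R -> 'rV[R]_3) (t : R) : 'rV[R]_3 :=
  derive f t 1.

Definition defgrad (R : realType) (chi : 'rV[R]_3 -> 'rV[R]_3) (X : 'rV[R]_3)
  : 'M[R]_3 := \matrix_(i < 3, I < 3) pd (fun Y => chi Y ord0 i) I X.

Definition jac (R : realType) (chi : 'rV[R]_3 -> 'rV[R]_3) (X : 'rV[R]_3) : R :=
  \det (defgrad chi X).

Definition sqnorm3 (R : realType) (v : 'rV[R]_3) : R := \sum_(i < 3) (v ord0 i) ^+ 2.

Definition E0 (R : realType) (kappa0 rho0 : R) (U : R -> 'rV[R]_3 -> 'rV[R]_3)
  (t : R) (X : 'rV[R]_3) : R :=
  kappa0 * (\sum_(I < 3) pd (fun Y => U t Y ord0 I) I X) ^+ 2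
  + rho0 * sqnorm3 (tdot (fun s => U s X) t).

Definition Emeta (R : realType) (lam rho : 'rV[R]_3 -> R) (V : 'rV[R]_3 -> 'M[R]_3)
  (u : R -> 'rV[R]_3 -> 'rV[R]_3) (t : R) (x : 'rV[R]_3) : R :=
  lam x * (\sum_(i < 3) \sum_(j < 3) V x i j * pd (fun y => u t y ord0 j) i x) ^+ 2
  + rho x * sqnorm3 (tdot (fun s => u s x) t).

Definition proper_orthogonal (R : realType) (Q : 'M[R]_3) : Prop :=
  Q *m Q^T = 1%:M /\ \det Q = 1.

Definition sym_posdef (R : realType) (V : 'M[R]_3) : Prop :=
  V^T = V /\ forall v : 'rV[R]_3, v != 0 -> 0 < (v *m V *m v^T) ord0 ord0.

Definition borel3 (R : realType) := g_sigma_algebraType (@open 'rV[R]_3).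

(* Main.v *)
Require Import Defs.
From HB Require Import structures.
From mathcomp Require Import all_boot all_order all_algebra.
From mathcomp Require Import fingroup perm.
From mathcomp Require Import all_classical all_reals all_analysis.
From mathcomp Require Import ring.
Import Order.TTheory GRing.Theory Num.Theory.
Import numFieldNormedType.Exports.
Local Open Scope classical_set_scope.
Local Open Scope ring_scope.



Lemma det_cont (R : realType) n : continuous (fun M : 'M[R]_n => \det M).
Proof.
have -> : (fun M : 'M[R]_n => \det M) =
   \sum_(s : 'S_n) (fun M : 'M[R]_n => (-1) ^+ s * \prod_i M i (s i)).
  by rewrite fct_sumE.
move=> M; apply: (big_ind (fun f : 'M[R]_n -> R => {for M, continuous f})).
- exact: cst_continuous.
- by move=> f g; apply: continuousD.
move=> s _.
have h2 : {for M, continuous (fun M : 'M[R]_n => \prod_i M i (s i))}.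
rewrite -fct_prodE.
apply: (big_ind (fun f : 'M[R]_n -> R => {for M, continuous f})).
- exact: cst_continuous.
- by move=> f g; apply: continuousM.
by move=> i _; apply: coord_continuous.
have h3 := (@continuousM _ _ (fun=> (-1) ^+ s) (fun M : 'M[R]_n => \prod_i M i (s i)) M (@cst_continuous _ _ _ M) h2).
exact: h3.
Qed.

Lemma open_preim (R : realType) n (D : set 'rV[R]_n) (g : 'rV[R]_n -> R) (I : set R) :
  open D -> open I -> (forall x, D x -> {for x, continuous g}) ->
  open (D `&` g @^-1` I).
Proof.
move=> oD oI cg; rewrite openE => x [Dx Ix].
rewrite /interior; apply: filterI.
  by move: oD; rewrite openE; apply.
have := cg x Dx; move=> /(_ I); apply.
by move: oI; rewrite openE; apply.
Qed.


Module H3.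
Set Implicit Arguments. Unset Strict Implicit. Unset Printing Implicit Defensive.


Section H.
Variable R : realType.

Lemma mulmxr_cont m n (M : 'M[R]_(m, n)) : continuous (mulmxr M : 'rV[R]_m -> 'rV[R]_n).
Proof.
have -> : (mulmxr M : 'rV[R]_m -> 'rV[R]_n) =
   \sum_(i < m) (fun v : 'rV[R]_m => v 0 i *: row i M).
  by apply/funext => v; rewrite fct_sumE /= mulmx_sum_row.
move=> v; apply: (big_ind (fun f : 'rV[R]_m -> 'rV[R]_n => {for v, continuous f})).
- exact: cst_continuous.
- by move=> f g; apply: continuousD.
move=> i _; apply: continuousZr_tmp; exact: coord_continuous.
Qed.

Lemma d_mulmxr m n (M : 'M[R]_(m, n)) x :
  differentiable (mulmxr M : 'rV[R]_m -> 'rV[R]_n) x /\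
  'd (mulmxr M : 'rV[R]_m -> 'rV[R]_n) x = mulmxr M :> ('rV_m -> 'rV_n).
Proof.
split; first exact: (@linear_differentiable R _ _ (mulmxr M) x (@mulmxr_cont _ _ M)).
exact: (@diff_lin R _ _ (mulmxr M) x (@mulmxr_cont _ _ M)).
Qed.

Lemma J_lin m n (f : 'rV[R]_m -> 'rV[R]_n) a v :
  differentiable f a -> 'd f a v = v *m 'J f a.
Proof. by move=> _; rewrite /jacobian mul_rV_lin1. Qed.

Lemma J_comp m n p (f : 'rV[R]_m -> 'rV[R]_n) (g : 'rV[R]_n -> 'rV[R]_p) a :
  differentiable f a -> differentiable g (f a) ->
  'J (g \o f) a = 'J f a *m 'J g (f a).
Proof.
move=> df dg; apply/row_matrixP => k; rewrite !rowE.
rewrite /jacobian mulmxA !mul_rV_lin1 /=.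
by rewrite diff_comp.
Qed.

Lemma J_mulmxr m n (M : 'M[R]_(m, n)) x : 'J (mulmxr M) x = M.
Proof.
apply/row_matrixP => k; rewrite !rowE /jacobian mul_rV_lin1.
by have [_ ->] := d_mulmxr M x.
Qed.

Lemma coord_lin m n (i : 'I_m) (j : 'I_n) :
  exists f : {linear 'M[R]_(m, n) -> R}, (f : _ -> _) = (fun N => N i j).
Proof.
have @f : {linear 'M[R]_(m, n) -> R}.
  by exists (fun N : 'M[R]_(_, _) => N i j); do 2![eexists]; do ?[constructor];
     rewrite ?mxE// => ? *; rewrite ?mxE//; move=> ?; rewrite !mxE.
by exists f.
Qed.

Lemma derive_coord (V : normedModType R) m n (f : V -> 'M[R]_(m, n)) a v i j :
  differentiable f a -> 'D_v (fun y => f y i j) a = ('D_v f a) i j.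
Proof.
move=> df.
have [c cE] := coord_lin i j.
have cc : continuous c by rewrite cE; exact: coord_continuous.
have -> : (fun y => f y i j) = c \o f by rewrite cE.
rewrite deriveE; last first.
  apply: differentiable_comp => //; exact: linear_differentiable.
rewrite diff_comp //; last exact: linear_differentiable.
by rewrite diff_lin // deriveE //= cE.
Qed.

Lemma pdJ (f : 'rV[R]_3 -> 'rV[R]_3) a i I :
  differentiable f a -> pd (fun Y => f Y ord0 i) I a = 'J f a I i.
Proof.
move=> df; rewrite /pd derive_coord // deriveE // J_lin //.
by rewrite -rowE mxE.
Qed.

Lemma derive_mulmxr (V : normedModType R) m n (f : V -> 'rV[R]_m) (M : 'M[R]_(m, n)) a v :
  differentiable f a -> 'D_v (fun s => f s *m M) a = 'D_v f a *m M.
Proof.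
move=> df; have [dM eM] := d_mulmxr M (f a).
have -> : (fun s => f s *m M) = mulmxr M \o f by [].
rewrite deriveE; last exact: differentiable_comp.
by rewrite diff_comp // eM deriveE.
Qed.

End H.



Lemma sum_trace (R : realType) (P Q : 'M[R]_3) :
  \sum_(i < 3) \sum_(j < 3) P i j * Q i j = \tr (P^T *m Q).
Proof.
rewrite /mxtrace exchange_big /=; apply: eq_bigr => j _.
by rewrite mxE; apply: eq_bigr => i _; rewrite mxE.
Qed.

Lemma sqnorm3E (R : realType) (v : 'rV[R]_3) : sqnorm3 v = (v *m v^T) ord0 ord0.
Proof. by rewrite /sqnorm3 mxE; apply: eq_bigr => i _; rewrite mxE expr2. Qed.

Lemma energy (R : realType) (Omega : set 'rV[R]_3)
  (chi chiinv : 'rV[R]_3 -> 'rV[R]_3) (V : 'rV[R]_3 -> 'M[R]_3) (Rot : 'M[R]_3)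
  (kappa0 rho0 : R) :
  open Omega ->
  (forall X, Omega X -> differentiable chi X) ->
  (forall X, Omega X -> chiinv (chi X) = X) ->
  (forall x, (chi @` Omega) x -> differentiable chiinv x) ->
  (forall X, Omega X -> 0 < jac chi X) ->
  proper_orthogonal Rot ->
  (forall X, Omega X -> sym_posdef (V X) /\ defgrad chi X = V X *m Rot) ->
  (forall U : R -> 'rV[R]_3 -> 'rV[R]_3,
     (forall t X, Omega X -> differentiable (U t) X) ->
     (forall t X, Omega X -> derivable (fun s => U s X) t 1) ->
     let u := fun t x => U t (chiinv x) *m Rot^T in
     let lam := fun x => (jac chi (chiinv x))^-1 * kappa0 in
     let rho := fun x => (jac chi (chiinv x))^-1 * rho0 in
     forall t X, Omega X ->
       Emeta lam rho (fun x => V (chiinv x)) u t (chi X) * jac chi X = E0 kappa0 rho0 U t X).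
Proof.
move=> oO dchi inv dinv jpos [RR _] hV U dU dUt u lam rho t X OX.
have RtR : Rot^T *m Rot = 1%:M by apply: mulmx1C.
have dchiX := dchi X OX.
have dinvX : differentiable chiinv (chi X) by apply: dinv; exists X.
have dUX := dU t X OX.
set A := 'J chi X; set B := 'J chiinv (chi X); set C := 'J (U t) X.
have fA : defgrad chi X = A^T.
  by apply/matrixP => i I; rewrite [LHS]mxE pdJ // [RHS]mxE.
have AB : A *m B = 1%:M.
  have dUinv : differentiable chiinv (chi X) by [].
  rewrite /A /B -J_comp //.
apply/row_matrixP => k; rewrite !rowE mulmx1 /jacobian mul_rV_lin1.
  rewrite -(@deriveE _ _ _ (chiinv \o chi)); last exact: differentiable_comp.
  rewrite (@near_eq_derive _ _ _ _ id); first by rewrite derive_id.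
  move: oO; rewrite openE => /(_ X OX) oX.
  by apply: filterS oX => Y OY /=; rewrite inv.
have VX : V X = A^T *m Rot^T.
  by rewrite -fA (proj2 (hV X OX)) -mulmxA RR mulmx1.
have Ju : forall i j, pd (fun y => u t y ord0 j) i (chi X) = (B *m C *m Rot^T) i j.
  move=> i j.
  have -> : (fun y => u t y ord0 j) = (fun y => ((mulmxr Rot^T \o (U t \o chiinv)) y) ord0 j) by [].
  have dUc : differentiable (U t \o chiinv) (chi X).
    by apply: differentiable_comp => //; rewrite inv.
  have [dM _] := d_mulmxr Rot^T ((U t \o chiinv) (chi X)).
  have dW : differentiable (mulmxr Rot^T \o (U t \o chiinv)) (chi X).
    exact: differentiable_comp.
  rewrite (pdJ j i dW) (J_comp dUc dM) J_mulmxr.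
  have dU' : differentiable (U t) (chiinv (chi X)) by rewrite inv.
  by rewrite (J_comp dinvX dU') /= inv.
have S0 : \sum_(I < 3) pd (fun Y => U t Y ord0 I) I X = \tr C.
  by rewrite /mxtrace; apply: eq_bigr => I _; rewrite (pdJ I I dUX).
clearbody A B C.
have Ssum : \sum_(i < 3) \sum_(j < 3) V (chiinv (chi X)) i j * pd (fun y => u t y ord0 j) i (chi X) = \tr C.
  rewrite (inv X OX).
  under eq_bigr => i _ do under eq_bigr => j _ do rewrite Ju.
  rewrite (sum_trace (V X) (B *m C *m Rot^T)).
  rewrite VX (trmx_mul (A^T) (Rot^T)) !trmxK !mulmxA.
  rewrite -(mulmxA Rot A B) AB mulmx1.
  by rewrite (mxtrace_mulC (Rot *m C) (Rot^T)) mulmxA RtR mul1mx.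
have Tu : tdot (fun s => u s (chi X)) t = tdot (fun s => U s X) t *m Rot^T.
  rewrite /tdot /u (inv X OX); apply: derive_mulmxr.
  by apply/derivable1_diffP; exact: dUt.
have Nu : sqnorm3 (tdot (fun s => u s (chi X)) t) = sqnorm3 (tdot (fun s => U s X) t).
  rewrite Tu !sqnorm3E trmx_mul trmxK !mulmxA -(mulmxA _ Rot^T Rot) RtR mulmx1.
  done.
rewrite /Emeta /E0 Ssum S0 Nu /lam /rho (inv X OX).
have jn : jac chi X != 0 by rewrite gt_eqF // jpos.
by field.
Qed.



Lemma mass (R : realType) (Omega : set 'rV[R]_3)
  (chi chiinv : 'rV[R]_3 -> 'rV[R]_3) 
  (rho0 : R) (mu : {measure set (borel3 R) -> \bar R}) :
  (forall X, Omega X -> {for X, continuous (defgrad chi)}) ->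
  (forall X, Omega X -> chiinv (chi X) = X) ->
  open (chi @` Omega) ->
  (forall x, (chi @` Omega) x -> differentiable chiinv x) ->
  (forall X, Omega X -> 0 < jac chi X) ->
  0 < rho0 ->
  (forall f : 'rV[R]_3 -> R, (forall x, 0 <= f x) ->
     measurable_fun (chi @` Omega : set (borel3 R)) f ->
     (\int[mu]_(x in (chi @` Omega : set (borel3 R))) (f x)%:E
      = \int[mu]_(X in (Omega : set (borel3 R))) (f (chi X) * jac chi X)%:E)%E) ->
  (\int[mu]_(x in (chi @` Omega : set (borel3 R))) ((jac chi (chiinv x))^-1 * rho0)%:E
   = \int[mu]_(X in (Omega : set (borel3 R))) rho0%:E)%E.
Proof.
move=> cF inv oO dinv jpos rpos cov.
pose g := fun x : 'rV[R]_3 => (`|jac chi (chiinv x)|)^-1 * rho0.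
have gge0 : forall x, 0 <= g x.
  by move=> x; rewrite /g mulr_ge0 ?invr_ge0 ?normr_ge0 // ltW.
have cg : forall x, (chi @` Omega) x -> {for x, continuous g}.
  move=> _ [X OX <-].
  have h1 : {for chi X, continuous chiinv} by apply: differentiable_continuous; apply: dinv; exists X.
  have h2 : {for chiinv (chi X), continuous (fun Y => jac chi Y)}.
    rewrite inv //.
    exact: (@continuous_comp _ _ _ (defgrad chi) (fun M => \det M) X (cF X OX) (@det_cont R 3 _)).
  have h3 : {for jac chi (chiinv (chi X)), continuous (fun y : R => `|y|^-1 * rho0)}.
    have nz : `|jac chi (chiinv (chi X))| != 0 by rewrite inv // normr_eq0 gt_eqF // jpos.
    apply: (@continuousM _ _ (fun y : R => `|y|^-1) (fun=> rho0)); last exact: cst_continuous.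
    exact: (@continuousV _ _ (fun y : R => `|y|) _ nz (@norm_continuous _ _ _)).
  exact: (continuous_comp (continuous_comp h1 h2) h3).
have mg : measurable_fun (chi @` Omega : set (borel3 R)) g.
  apply: (measurability _ (measurable_realfun.RGenOpens.measurableE R)).
  move=> _ [_ [a [b ->]] <-].
  apply: sub_sigma_algebra.
  apply: open_preim => //.
transitivity (\int[mu]_(x in (chi @` Omega : set (borel3 R))) (g x)%:E)%E.
  apply: eq_integral => x; rewrite inE => -[X OX <-].
  by rewrite /g inv // gtr0_norm // jpos.
rewrite cov //.
apply: eq_integral => X; rewrite inE => OX.
by rewrite /g inv // gtr0_norm ?jpos // mulrC mulrA mulfV ?gt_eqF ?jpos // mul1r.
Qed.

End H3.
Import H3.

Theorem lemma1 (R : realType) (Omega : set 'rV[R]_3)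
  (chi chiinv : 'rV[R]_3 -> 'rV[R]_3) (V : 'rV[R]_3 -> 'M[R]_3) (Rot : 'M[R]_3)
  (kappa0 rho0 : R) (mu : {measure set (borel3 R) -> \bar R}) :
  (* Omega is a domain *)
  open Omega -> Omega !=set0 -> connected Omega ->
  (* chi is smooth (C^1), one-to-one, with a differentiable inverse on omega = chi(Omega) *)
  (forall X, Omega X -> differentiable chi X) ->
  (forall X, Omega X -> {for X, continuous (defgrad chi)}) ->
  (forall X Y, Omega X -> Omega Y -> chi X = chi Y -> X = Y) ->
  (forall X, Omega X -> chiinv (chi X) = X) ->
  open (chi @` Omega) ->
  (forall x, (chi @` Omega) x -> differentiable chiinv x) ->
  (* Lambda = det F > 0 *)
  (forall X, Omega X -> 0 < jac chi X) ->
  (* polar decomposition F = V R with constant rotation R *)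
  proper_orthogonal Rot ->
  (forall X, Omega X -> sym_posdef (V X) /\ defgrad chi X = V X *m Rot) ->
  0 < kappa0 -> 0 < rho0 ->
  (* standing convention dv = Lambda dV (change of variables for the volume measure mu) *)
  (forall f : 'rV[R]_3 -> R, (forall x, 0 <= f x) ->
     measurable_fun (chi @` Omega : set (borel3 R)) f ->
     (\int[mu]_(x in (chi @` Omega : set (borel3 R))) (f x)%:E
      = \int[mu]_(X in (Omega : set (borel3 R))) (f (chi X) * jac chi X)%:E)%E) ->
  (* equivalence of energy densities: E dv = E0 dV under u = R U *)
  (forall U : R -> 'rV[R]_3 -> 'rV[R]_3,
     (forall t X, Omega X -> differentiable (U t) X) ->
     (forall t X, Omega X -> derivable (fun s => U s X) t 1) ->
     let u := fun t x => U t (chiinv x) *m Rot^T in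
     let lam := fun x => (jac chi (chiinv x))^-1 * kappa0 in
     let rho := fun x => (jac chi (chiinv x))^-1 * rho0 in
     forall t X, Omega X ->
       Emeta lam rho (fun x => V (chiinv x)) u t (chi X) * jac chi X = E0 kappa0 rho0 U t X)
  /\
  (* conservation of total mass *)
  (\int[mu]_(x in (chi @` Omega : set (borel3 R))) ((jac chi (chiinv x))^-1 * rho0)%:E
   = \int[mu]_(X in (Omega : set (borel3 R))) rho0%:E)%E.
Proof.
move=> oO ne cO dchi cF inj inv oI dinv jpos PO hV k0 r0 cov.
split.
  exact: (@energy R Omega chi chiinv V Rot kappa0 rho0 oO dchi inv dinv jpos PO hV).
exact: (@mass R Omega chi chiinv rho0 mu cF inv oI dinv jpos r0 cov).
Qed.
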